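(* Let $p>2$ be prime and let $\mathcal{C}$ be a $\mathbb{Z}_p\mathbb{Z}_{p^2}$-additive code, i.e. a subgroup of $\mathbb{Z}_p^\alpha\times\mathbb{Z}_{p^2}^\beta$. Then the code $C=\Phi(\mathcal{C})\subseteq\mathbb{Z}_p^{\alpha+p\beta}$ is linear over $\mathbb{Z}_p$ if and only if $pP'(\mathbf{u},\mathbf{v})\in\mathcal{C}$ for all $\mathbf{u},\mathbf{v}\in\mathcal{C}$.
   Context: The Gray map $\phi:\mathbb{Z}_{p^2}\to\mathbb{Z}_p^p$ is $\phi(\theta)=\theta''(1,\ldots,1)+\theta'(0,1,\ldots,p-1)$ where $\theta=\theta''p+\theta'$, $\theta',\theta''\in\{0,\ldots,p-1\}$; and $\Phi(\mathbf{x},\mathbf{y})=(\mathbf{x},\phi(y_1),\ldots,\phi(y_\beta))$ for $\mathbf{x}\in\mathbb{Z}_p^\alpha$, $\mathbf{y}\in\mathbb{Z}_{p^2}^\beta$. For $\mathbf{u}=(u_1,\ldots,u_{\alpha+\beta}),\mathbf{v}=(v_1,\ldots,v_{\alpha+\beta})\in\mathbb{Z}_p^\alpha\times\mathbb{Z}_{p^2}^\beta$, write $u_i=u_i''p+u_i'$, $v_i=v_i''p+v_i'$ ($u_i',v_i'\in\{0,\ldots,p-1\}$) for $i>\alpha$. Then $pP'(\mathbf{u},\mathbf{v})\in\mathbb{Z}_p^\alpha\times\mathbb{Z}_{p^2}^\beta$ is the vector whose first $\alpha$ coordinates are $0$ and whose coordinate $i>\alpha$ equals $p(p-1)\in\mathbb{Z}_{p^2}$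 if $u_i'+v_i'\ge p$ and $0$ otherwise. *)

(* Defs.v *)
From HB Require Import structures.
From mathcomp Require Import all_boot all_order all_algebra.
Set Implicit Arguments. Unset Strict Implicit. Unset Printing Implicit Defensive.
Import GRing.Theory.
Local Open Scope ring_scope.

(* Ambient group Z_p^alpha x Z_{p^2}^beta (p prime, so 'Z_p and 'Z_(p^2) are
   the genuine rings Z/pZ and Z/p^2Z). *)
Definition ZpZp2 (p a b : nat) := ('rV['Z_p]_a * 'rV['Z_(p ^ 2)]_b)%type.

Definition additive_code (p a b : nat) (C : {set ZpZp2 p a b}) : Prop :=
  0 \in C /\ (forall u v, u \in C -> v \in C -> u - v \in C).

(* Gray map phi : Z_{p^2} -> Z_p^p,
   phi(theta) = theta''(1,...,1) + theta'(0,1,...,p-1), theta = theta'' p + theta'.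
   gray_at p t r is the r-th coordinate (0 <= r < p) of phi(t). *)
Definition gray_at (p : nat) (t : 'Z_(p ^ 2)) (r : nat) : 'Z_p :=
  ((val t %/ p)%N)%:R + ((val t %% p)%N)%:R * r%:R.

Definition gray (p : nat) (t : 'Z_(p ^ 2)) : 'rV['Z_p]_p :=
  \row_(r < p) gray_at t r.

(* Phi(x, y) = (x, phi(y_1), ..., phi(y_beta)); coordinate alpha + k*p + r
   (k < beta, r < p) of the result is the r-th coordinate of phi(y_k). *)
Definition Gray (p a b : nat) (u : ZpZp2 p a b) : 'rV['Z_p]_(a + p * b) :=
  \row_(i < a + p * b)
    match split i with
    | inl j => u.1 0 j
    | inr k =>
        match (insub (val k %/ p)%N : option 'I_b) with
        | Some kb => gray_at (u.2 0 kb) (val k %% p)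
        | None => 0 (* unreachable: val k < p * b *)
        end
    end.

Definition Gray_image (p a b : nat) (Cc : {set ZpZp2 p a b}) : {set 'rV['Z_p]_(a + p * b)} :=
  [set Gray u | u in Cc].

Definition Zp_linear (p n : nat) (C : {set 'rV['Z_p]_n}) : Prop :=
  0 \in C /\ (forall x y, x \in C -> y \in C -> x + y \in C)
  /\ (forall (c : 'Z_p) x, x \in C -> c *: x \in C).

Definition pP' (p a b : nat) (u v : ZpZp2 p a b) : ZpZp2 p a b :=
  (0, \row_(i < b)
        (if (p <= (val (u.2 ord0 i) %% p) + (val (v.2 ord0 i) %% p))%N
         then ((p * (p - 1))%N)%:R else 0)).

(* Main.v *)
Require Import Defs.
From mathcomp Require Import all_boot all_order all_algebra.
From mathcomp Require Import zify ring.
Import GRing.Theory.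
Local Open Scope ring_scope.

Definition G (p N r : nat) : 'Z_p := ((N %/ p)%N)%:R + ((N %% p)%N)%:R * r%:R.

Lemma natp0 (p : nat) : (1 < p)%N -> (p%:R : 'Z_p) = 0.
Proof. by move=> hp; apply: val_inj; rewrite /= val_Zp_nat // modnn. Qed.

Lemma Gq (p q m r : nat) : (1 < p)%N -> (m < p)%N ->
  G p (q * p + m)%N r = q%:R + m%:R * r%:R.
Proof.
move=> hp hm; rewrite /G divnMDl ?(ltn_trans _ hp) // modnMDl divn_small // modn_small //.
by rewrite addn0.
Qed.

Lemma Gmod (p N r : nat) : (1 < p)%N -> G p N r = G p (N %% p ^ 2) r.
Proof.
move=> hp; set W := (N %% p ^ 2)%N.
have hpp : (0 < p)%N by apply: ltn_trans hp.
have eN : N = (((N %/ p ^ 2) * p + W %/ p) * p + W %% p)%N.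
  rewrite {1}(divn_eq N (p ^ 2)) -/W {1}(divn_eq W p).
  by rewrite mulnDl -mulnA addnA mulnn.
rewrite {1}eN Gq ?ltn_pmod // [in RHS](divn_eq W p) Gq ?ltn_pmod //.
by rewrite natrD natrM natp0 // mulr0 add0r.
Qed.

Lemma Geq (p N M r : nat) : (1 < p)%N -> N = M %[mod p ^ 2] -> G p N r = G p M r.
Proof. by move=> hp e; rewrite Gmod // e -Gmod. Qed.

Lemma p2gt1 p : (1 < p)%N -> (1 < p ^ 2)%N.
Proof. move=> hp; rewrite (ltn_trans hp) // -{1}(expn1 p) ltn_exp2l //. Qed.

Lemma valZD (p : nat) (hp : (1 < p)%N) (x y : 'Z_(p ^ 2)) :
  val (x + y) = (val x + val y)%N %[mod p ^ 2].
Proof. rewrite /=; move: (nat_of_ord x + nat_of_ord y)%N => n; by rewrite Zp_cast ?p2gt1 // modn_mod. Qed.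

Lemma valZn (p : nat) (hp : (1 < p)%N) n :
  val (n%:R : 'Z_(p ^ 2)) = n %[mod p ^ 2].
Proof. change (nat_of_ord (n%:R : 'Z_(p ^ 2)) = n %[mod p ^ 2]); by rewrite val_Zp_nat ?p2gt1 // modn_mod. Qed.

Lemma core (p : nat) (hp : (1 < p)%N) (s t : 'Z_(p ^ 2)) r :
  gray_at s r + gray_at t r =
  gray_at (s + t + (if (p <= (val s %% p) + (val t %% p))%N
         then ((p * (p - 1))%N)%:R else 0)) r.
Proof.
rewrite /gray_at -!/(G _ _ _).
have hpp : (0 < p)%N by apply: ltn_trans hp.
set s1 := (val s %/ p)%N; set s0 := (val s %% p)%N.
set t1 := (val t %/ p)%N; set t0 := (val t %% p)%N.
have es : val s = (s1 * p + s0)%N by apply: divn_eq.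
have et : val t = (t1 * p + t0)%N by apply: divn_eq.
have hs0 : (s0 < p)%N by apply: ltn_pmod.
have ht0 : (t0 < p)%N by apply: ltn_pmod.
case: ifP => hc.
- rewrite [RHS](@Geq p _ ((s1 + t1 + p) * p + (s0 + t0 - p))%N) //; last first.
    rewrite valZD // -modnDm valZD // -modnDm valZn // !modnDm es et.
    congr (_ %% _)%N; nia.
  rewrite Gq //; last by lia.
  rewrite -[G p (val s) r]/(G p (val s) r) es et !Gq // !natrD natrB // natp0 //.
  ring.
- rewrite addr0 [RHS](@Geq p _ ((s1 + t1) * p + (s0 + t0))%N) //; last first.
    by rewrite valZD // es et; congr (_ %% _)%N; nia.
  rewrite Gq; last by lia. 2: done.
  rewrite es et !Gq // !natrD; ring.
Qed.

Lemma ltZ (m : nat) (hm : (1 < m)%N) (s : 'Z_m) : (val s < m)%N.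
Proof. by case: m hm s => [|[|m]] // _ s; exact: ltn_ord. Qed.

Lemma gray_inj (p : nat) (hp : (1 < p)%N) (s t : 'Z_(p ^ 2)) :
  (forall r, (r < p)%N -> gray_at s r = gray_at t r) -> s = t.
Proof.
move=> H; have hpp : (0 < p)%N by apply: ltn_trans hp.
have lt1 : forall x : 'Z_(p ^ 2), (val x %/ p < p)%N.
  by move=> x; rewrite ltn_divLR // mulnn; apply: ltZ; apply: p2gt1.
have E0 := H 0%N hpp; have E1 := H 1%N hp.
rewrite /gray_at !mulr0 !addr0 in E0.
rewrite /gray_at E0 !mulr1 in E1; move/addrI: E1 => E1.
have e1 : (val s %/ p = val t %/ p)%N.
  move/(congr1 (@nat_of_ord _)): E0; rewrite !val_Zp_nat // !modn_small //.
have e0 : (val s %% p = val t %% p)%N.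
  move/(congr1 (@nat_of_ord _)): E1; rewrite !val_Zp_nat // !modn_mod //.
by apply: val_inj; rewrite /= (divn_eq (val s) p) (divn_eq (val t) p) e1 e0.
Qed.

Lemma Gray_add (p a b : nat) (hp : (1 < p)%N) (u v : ZpZp2 p a b) :
  Gray u + Gray v = Gray (u + v + pP' u v).
Proof.
apply/rowP => i; rewrite !mxE.
case: (split i) => [j|k].
  by rewrite /= !mxE addr0.
case: insub => [kb|]; last by rewrite addr0.
rewrite /= !mxE; exact: core.
Qed.

Lemma Gray_inj (p a b : nat) (hp : (1 < p)%N) (u v : ZpZp2 p a b) :
  Gray u = Gray v -> u = v.
Proof.
move/rowP => E; have hpp : (0 < p)%N by apply: ltn_trans hp.
case: u E => [u1 u2]; case: v => [v1 v2] E.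
congr (_, _).
  apply/rowP => j; have := E (unsplit (inl j)); by rewrite !mxE unsplitK.
apply/rowP => kb. apply: (@gray_inj p hp (u2 0 kb) (v2 0 kb)) => r hr.
have hi : (kb * p + r < p * b)%N.
  have := ltn_ord kb; nia.
have := E (unsplit (inr (Ordinal hi))); rewrite !mxE unsplitK /=.
rewrite divnMDl // divn_small // addn0 modnMDl modn_small //.
by rewrite -[X in insub X]/(val kb) valK.
Qed.

Theorem lemma4 (p alpha beta : nat) (hp : prime p) (hp2 : (2 < p)%N)
  (Cc : {set ZpZp2 p alpha beta}) (HC : additive_code Cc) :
  Zp_linear (Gray_image Cc) <->
  (forall u v, u \in Cc -> v \in Cc -> pP' u v \in Cc).
Proof.
have hp1 : (1 < p)%N by apply: prime_gt1.
case: HC => C0 CB.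
have CN : forall v, v \in Cc -> - v \in Cc by move=> v hv; rewrite -sub0r CB.
have CD : forall u v, u \in Cc -> v \in Cc -> u + v \in Cc.
  by move=> u v hu hv; rewrite -[v]opprK CB // CN.
split.
- case=> _ [Hadd _] u v hu hv.
  have : Gray u + Gray v \in Gray_image Cc by apply: Hadd; apply: imset_f.
  case/imsetP => w hw; rewrite Gray_add // => /(@Gray_inj _ _ _ hp1 _ _) ew.
  have -> : pP' u v = w - (u + v) by rewrite -ew addrC addKr.
  by apply: CB => //; apply: (CD).
- move=> HP.
  have Hadd : forall x y, x \in Gray_image Cc -> y \in Gray_image Cc ->
      x + y \in Gray_image Cc.
    move=> x y /imsetP [u hu ->] /imsetP [v hv ->].
    by rewrite Gray_add //; apply: imset_f; apply: (CD); [apply: (CD)|apply: (HP)].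
  have G0 : 0 \in Gray_image Cc.
    have -> : (0 : 'rV['Z_p]_(alpha + p * beta)) = Gray 0.
      apply/rowP => i; rewrite !mxE; case: (split i) => [j|k] /=; first by rewrite mxE.
      case: insub => [kb|] //; rewrite mxE /gray_at /= div0n mod0n mul0r addr0.
      done.
    exact: imset_f.
  split; first exact: G0.
  split; first exact: Hadd.
  move=> c x hx.
  have -> : c = (nat_of_ord c)%:R.
    apply: val_inj.
    change (nat_of_ord c = nat_of_ord ((nat_of_ord c)%:R : 'Z_p)).
    rewrite val_Zp_nat // modn_small //; exact: ltZ.
  rewrite scaler_nat; elim: (nat_of_ord c) => [|n IH]; first by rewrite mulr0n.
  by rewrite mulrS Hadd.
Qed.
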